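(* Let $G$ be a digraph with at least one arc, and let $d(G)$ and $d(LG)$ denote the inner diameters of $G$ and of its line digraph $LG$. Then $$d(G)-1\le d(LG)\le d(G)+1.$$
   Context: Digraphs are finite and may have loops and multiple arcs. $\mathrm{dist}_G(u,v)$ is the length of a shortest directed walk from $u$ to $v$ ($\infty$ if none; $\mathrm{dist}_G(u,u)=0$). The inner diameter of $G$ is $d(G)=\max\{\mathrm{dist}_G(u,v): u,v\in V(G),\ \mathrm{dist}_G(u,v)<\infty\}$. The line digraph $LG$ has as vertex set the set of arcs of $G$, with an arc from $e$ to $f$ whenever the head of $e$ equals the tail of $f$. *)

(* Defs.v *)
From mathcomp Require Import all_boot.
Unset Printing Implicit Defensive.

(* A finite digraph, possibly with loops and multiple arcs:
   finite vertex type, finite darc type, dtail and dhead maps. *)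
Record digraph := Digraph {
  dvert : finType;
  darc : finType;
  dtail : darc -> dvert;
  dhead : darc -> dvert }.
Arguments dtail {G} _ : rename.
Arguments dhead {G} _ : rename.
Arguments Digraph {dvert darc} dtail dhead : rename.

Fixpoint is_walk (G : digraph) (u v : dvert G) (s : seq (darc G)) : bool :=
  match s with
  | [::] => u == v
  | a :: s' => (dtail a == u) && is_walk G (dhead a) v s'
  end.

Definition walk_of_length (G : digraph) (k : nat) (u v : dvert G) : Prop :=
  exists s : seq (darc G), size s = k /\ is_walk G u v s.

Definition is_dist (G : digraph) (u v : dvert G) (k : nat) : Prop :=
  walk_of_length G k u v /\ forall j, j < k -> ~ walk_of_length G j u v.

Definition is_inner_diameter (G : digraph) (d : nat) : Prop :=
  (exists u v, is_dist G u v d) /\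
  (forall u v k, is_dist G u v k -> k <= d).

Definition line_arc (G : digraph) : finType :=
  {p : darc G * darc G | dhead p.1 == dtail p.2}.

Definition line_digraph (G : digraph) : digraph :=
  @Digraph (darc G) (line_arc G)
    (fun p : line_arc G => (val p).1) (fun p : line_arc G => (val p).2).

(* Main.v *)
From Stdlib Require Import Classical.
Require Import Defs.
From mathcomp Require Import all_boot.
From mathcomp Require Import zify.

Set Implicit Arguments. Unset Strict Implicit.
Section W.
Context {X : digraph}.

Lemma walk_cat (u v w : dvert X) s1 s2 :
  is_walk X u v s1 -> is_walk X v w s2 -> is_walk X u w (s1 ++ s2).
Proof.
elim: s1 u => [|a s IH] u /=; first by move/eqP->.
by case/andP=> -> H1 H2; rewrite IH.
Qed.

Lemma walk_split (u w : dvert X) s1 s2 :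
  is_walk X u w (s1 ++ s2) -> exists v, is_walk X u v s1 /\ is_walk X v w s2.
Proof.
elim: s1 u => [|a s IH] u /=; first by move=> H; exists u; split.
case/andP=> Ha /IH [v [H1 H2]]; exists v; split=> //; by rewrite Ha.
Qed.

Lemma wl_cat k1 k2 (u v w : dvert X) :
  walk_of_length X k1 u v -> walk_of_length X k2 v w ->
  walk_of_length X (k1 + k2) u w.
Proof.
move=> [s1 [E1 H1]] [s2 [E2 H2]]; subst k1 k2; exists (s1 ++ s2); split.
  by rewrite size_cat.
exact: walk_cat H1 H2.
Qed.

Lemma wl0 (u : dvert X) : walk_of_length X 0 u u.
Proof. rewrite /walk_of_length. exists [::]. split; first by []. by rewrite /= eqxx. Qed.

Lemma dist_le (u v : dvert X) j k :
  is_dist X u v j -> walk_of_length X k u v -> j <= k.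
Proof.
move=> [_ H] W; case: (leqP j k) => // lt; by case: (H k lt).
Qed.

Lemma dist_uniq (u v : dvert X) j k :
  is_dist X u v j -> is_dist X u v k -> j = k.
Proof.
move=> Hj Hk; apply/eqP; rewrite eqn_leq (dist_le Hj (proj1 Hk)).
by rewrite (dist_le Hk (proj1 Hj)).
Qed.

Lemma reach_dist (u v : dvert X) k :
  walk_of_length X k u v -> exists j, is_dist X u v j.
Proof.
elim: k {-2}k (leqnn k) => [|n IH] k Hk W.
  exists k; split=> // j; by move: Hk; case: k {W} => // _; rewrite ltn0.
case: (classic (exists j, j < k /\ walk_of_length X j u v)).
  move=> [j [Hj Wj]]; apply: (IH j) => //; lia.
move=> N; exists k; split=> // j Hj Wj; apply: N; by exists j.
Qed.

Lemma bound_pairs (l : seq (dvert X * dvert X)) :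
  exists m, forall p, p \in l -> forall k, is_dist X p.1 p.2 k -> k <= m.
Proof.
elim: l => [|p l [m IH]]; first by exists 0.
case: (classic (exists k, is_dist X p.1 p.2 k)).
  move=> [k0 H0]; exists (maxn m k0) => q; rewrite inE; case/orP.
    move/eqP=> -> k Hk; rewrite (dist_uniq Hk H0); lia.
  move=> Hq k Hk; have := IH q Hq k Hk; lia.
move=> N; exists m => q; rewrite inE; case/orP; last exact: IH.
move/eqP=> -> k Hk; case: N; by exists k.
Qed.

Lemma max_exists (P : nat -> Prop) m :
  (exists k, P k) -> (forall k, P k -> k <= m) ->
  exists d, P d /\ forall k, P k -> k <= d.
Proof.
elim: m => [|m IH] Hne Hb.
  case: Hne => k Hk; exists k; split=> // j Hj; have := Hb j Hj; lia.
case: (classic (P m.+1)) => [Hm|Hm]; first by exists m.+1.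
apply: IH => // k Hk; have := Hb k Hk; case: (ltngtP k m.+1) => //.
by move=> E; rewrite E in Hk.
Qed.

Lemma diam_exists (x0 : dvert X) : exists d, is_inner_diameter X d.
Proof.
have [m Hm] := bound_pairs (enum [set: dvert X * dvert X]).
have := @max_exists (fun k => exists u v, is_dist X u v k) m.
case.
- exists 0, x0, x0; split; first exact: wl0.
  by move=> j; rewrite ltn0.
- move=> k [u [v Hk]]; apply: (Hm (u, v)) => //; by rewrite mem_enum inE.
- move=> d [Hd Hmax]; exists d; split=> // u v k Hk; apply: Hmax; by exists u, v.
Qed.

End W.

Section L.
Context {G : digraph}.
Notation LG := (line_digraph G).

Lemma lg_back (e f : darc G) s :
  is_walk G (dhead e) (dtail f) s -> walk_of_length LG (size s).+1 e f.
Proof.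
elim: s e => [|a s IH] e /=.
  move=> H; exists [:: (exist _ (e, f) H : line_arc G)]; split=> //=.
  by rewrite !eqxx.
case/andP=> Ha Hw; have [t [Ht Wt]] := IH a Hw.
rewrite eq_sym in Ha.
exists ((exist _ (e, a) Ha : line_arc G) :: t); split; first by rewrite /= Ht.
by rewrite /= eqxx.
Qed.

Lemma lg_fwd (e f : darc G) p t :
  is_walk LG e f (p :: t) ->
  exists s, size s = size t /\ is_walk G (dhead e) (dtail f) s.
Proof.
elim: t e p => [|q t IH] e p /=.
  case/andP=> /eqP He /eqP Hf; exists [::]; split=> //=.
  case: p He Hf => [[x y] H] /= <- <-; exact: H.
case/andP=> /eqP He Hw.
have [s [Hs Ws]] := IH _ _ Hw.
exists ((val p).2 :: s); split; first by rewrite /= Hs.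
rewrite /=; move: Ws; case: p He {Hw} => [[x y] H] /= <- Ws; rewrite Ws andbT; by rewrite eq_sym.
Qed.

Lemma lg_wl_back j (e f : darc G) :
  walk_of_length G j (dhead e) (dtail f) -> walk_of_length LG j.+1 e f.
Proof. move=> [s [<- H]]; exact: lg_back. Qed.

Lemma lg_wl_fwd k (e f : darc G) :
  walk_of_length LG k.+1 e f -> walk_of_length G k (dhead e) (dtail f).
Proof.
move=> [[|p t] [//= Ht W]]; have [s [Hs Ws]] := @lg_fwd _ _ _ _ W.
exists s; split=> //; rewrite Hs; by case: Ht.
Qed.

Lemma lg_wl0 (e f : darc G) : walk_of_length LG 0 e f -> e = f.
Proof. by move=> [[|p t] [//= _ /eqP]]. Qed.

End L.

Unset Implicit Arguments.

Theorem proposition2p3 (G : digraph) (a0 : darc G) :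
  (exists d, is_inner_diameter G d) /\
  (exists d, is_inner_diameter (line_digraph G) d) /\
  (forall dG dLG, is_inner_diameter G dG ->
     is_inner_diameter (line_digraph G) dLG ->
     dG - 1 <= dLG /\ dLG <= dG + 1).
Proof.
split; first exact: (@diam_exists G (dtail a0)).
split; first exact: (@diam_exists (line_digraph G) a0).
move=> dG dLG [[u [v HG]] MG] [[e [f HL]] ML]; split.
- case: dG HG MG => [|[|m]] HG MG //.
  have [[|a s1] [Hs W]] := proj1 HG; first by [].
  case/lastP: s1 Hs W => [|s2 b] Hs; first by [].
  rewrite /= size_rcons in Hs; case: Hs => Hs.
  move=> /= /andP [/eqP Ha W]; rewrite -cats1 in W.
  have [w [W1 W2]] := walk_split W.
  move: W2 => /= /andP [/eqP Hb /eqP Hv].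
  have Wab : walk_of_length G m (dhead a) (dtail b).
    by exists s2; rewrite Hb.
  have [j Hj] := reach_dist (lg_wl_back Wab).
  have := MG; have := ML e f; move=> _ _.
  have Hjle := ML a b j Hj.
  suff : m.+1 <= j by lia.
  case: (leqP m.+1 j) => // lt; exfalso.
  case: j Hj lt {Hjle} => [|i] Hj lt.
    have Eab := lg_wl0 (proj1 Hj); subst b.
    apply: (proj2 HG 1) => //; exists [:: a]; split=> //. rewrite /= Ha Hv !eqxx //=.

  have [s' [Hs' Ws']] := lg_wl_fwd (proj1 Hj).
  apply: (proj2 HG (i.+2)); first lia.
  exists (a :: s' ++ [:: b]); split; first by rewrite /= size_cat Hs' addn1.
  rewrite /= Ha eqxx /=; apply: (walk_cat Ws') => /=; by rewrite Hv !eqxx.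
- case: dLG HL ML => [|k] HL ML; first by [].
  have Wg := lg_wl_fwd (proj1 HL).
  have [j Hj] := reach_dist Wg.
  have Hjk := dist_le Hj Wg.
  have := MG _ _ _ Hj => HjG.
  have := dist_le HL (lg_wl_back (proj1 Hj)); lia.
Qed.
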